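(* Let $M\in\mathbb Z_{\geq0}$ and $v_0,\dots,v_M\in\mathcal V$ with $v_0<v_1<\dots<v_M$ and $v_{i+1}\in\pi(\Psi(v_i))$ for all $i\in\{0,\dots,M-1\}$. Then $M\leq (n+1)\frac{v_M+\mu_\kappa}{\tau}+h(v_M)$.
   Context: Let $\mathbf K$ be a field and $\ell\geq 2$ an integer. Let $L=a_n\phi_\ell^n+\dots+a_0$ with $n\geq1$, $a_i\in\mathbf K[z]$, $a_0a_n\neq0$, where $\phi_\ell(f)(z)=f(z^\ell)$ acting on Hahn series with coefficients in $\mathbf K$ and value group $\mathbb Q$. Let $\mathcal P(L)=\{(\ell^i,j): 0\le i\le n,\ j\in\operatorname{supp} a_i\}$. The Newton polygon of $L$ is the convex hull of $\{(\ell^i,j): 0\le i\le n,\ j\geq\operatorname{val} a_i\}\subset\mathbb R^2$; its non-vertical edges have slopes $\mu_1<\dots<\mu_\kappa$, $\mathcal S(L)=\{\mu_1,\dots,\mu_\kappa\}$. Let $d\geq1$ be a common multiple of the denominators of the $\mu_k$; $\mathbb Z_{d,\ell}=\bigcup_{i\geq0}\frac{1}{d\ell^i}\mathbb Z$, and $h(v)=\min\{i\geq0: v\in\frac1{d\ell^i}\mathbb Z\}$ for $v\in\mathbb Z_{d,\ell}$. Define $\Psi(v)=\{v\ell^i+j:(\ell^i,j)\in\mathcal P(L)\}$, $\pi(q)=\max\{(q-j)/\ell^i:(\ell^i,j)\in\mathcal P(L)\}$. Let $\mathcal V_0=-\mathcal S(L)$, $\mathcal V_{i+1}=\bigcup_{v\in\mathcal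 V_i}\pi(\Psi(v))$, $\mathcal V=\bigcup_{i\ge0}\mathcal V_i$ (a well-ordered subset of $\mathbb Z_{d,\ell}$). For $v\in\mathbb Q$ let $\epsilon(v)=\min\{w\in\mathcal V: w>v\}-v\in\mathbb Q_{>0}\cup\{+\infty\}$ ($+\infty$ if this set is empty), and $\tau=\min\{\epsilon(-\mu_1),\dots,\epsilon(-\mu_\kappa),(d\ell^n)^{-1}\}\in\mathbb Q_{>0}$. *)

(* Defs.v *)
From HB Require Import structures.
From mathcomp Require Import all_boot all_order all_algebra.
Set Implicit Arguments. Unset Strict Implicit. Unset Printing Implicit Defensive.
Import Order.TTheory GRing.Theory Num.Theory.
Local Open Scope ring_scope.

(* The operator L = a_n phi^n + ... + a_0 is represented by ell, n and the
   coefficient polynomials a 0, ..., a n (values a i for i > n are ignored). *)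
Section Defs.
Variables (K : fieldType) (ell n : nat) (a : nat -> {poly K}).

Definition valp (p : {poly K}) : nat := find (fun c => c != 0) (polyseq p).

(* the points (ell^i, j) of P(L), encoded by the pairs (i, j) *)
Definition ptsP : seq (nat * nat) :=
  [seq (i, j) | i <- iota 0 n.+1,
                j <- [seq j <- iota 0 (size (a i)) | (a i)`_j != 0]].

(* mu is the slope of a non-vertical edge of the Newton polygon:
   the supporting line of slope mu of the Newton polygon (i.e. the minimum of
   y - mu x over the polygon) touches it at two points with distinct abscissae *)
Definition isSlope (mu : rat) : Prop :=
  exists i1 i2 : nat, [/\ i1 != i2, (i1 <= n)%N, (i2 <= n)%N, a i1 != 0 & a i2 != 0] /\
    (forall i, (i <= n)%N -> a i != 0 ->
      ((valp (a i1))%:R - mu * (ell ^ i1)%:R <= (valp (a i))%:R - mu * (ell ^ i)%:R)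
      /\ ((valp (a i2))%:R - mu * (ell ^ i2)%:R <= (valp (a i))%:R - mu * (ell ^ i)%:R)).

Definition inPsi (v q : rat) : Prop :=
  exists i j : nat, [/\ (i <= n)%N, (a i)`_j != 0 & q = v * (ell ^ i)%:R + j%:R].

Definition piL (q : rat) : rat :=
  let p0 := head (0%N, 0%N) ptsP in
  \big[Num.max/((q - p0.2%:R) / (ell ^ p0.1)%:R)]_(p <- ptsP)
     ((q - p.2%:R) / (ell ^ p.1)%:R).

Fixpoint inVk (k : nat) : rat -> Prop :=
  match k with
  | 0 => fun w => isSlope (- w)
  | k'.+1 => fun w => exists v, inVk k' v /\ exists q, inPsi v q /\ w = piL q
  end.

Definition inV (w : rat) : Prop := exists k, inVk k w.

(* tau = min{eps(-mu_1), ..., eps(-mu_kappa), 1/(d ell^n)}, i.e. the minimum of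
   1/(d ell^n) together with all w + mu for mu in S(L), w in V, w > -mu *)
Definition is_tau (d : nat) (tau : rat) : Prop :=
  [/\ tau = 1 / (d * ell ^ n)%:R
      \/ (exists mu w, [/\ isSlope mu, inV w, - mu < w & tau = w + mu]),
      tau <= 1 / (d * ell ^ n)%:R &
      forall mu w, isSlope mu -> inV w -> - mu < w -> tau <= w + mu].

End Defs.

(* h(v) = min { i >= 0 : v \in (1/(d ell^i)) Z }; the search is bounded by
   denq v, which suffices for every v in Z_{d,ell} *)
Definition hfun (d ell : nat) (v : rat) : nat :=
  find (fun i => denq (v * (d * ell ^ i)%:R) == 1) (iota 0 `|denq v|%N.+1).

(* Main.v *)
Require Import Defs.
From HB Require Import structures.
From mathcomp Require Import all_boot all_order all_algebra.
From mathcomp Require Import zify ring lra.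
Set Implicit Arguments. Unset Strict Implicit. Unset Printing Implicit Defensive.
Import Order.TTheory GRing.Theory Num.Theory.
Local Open Scope ring_scope.

Lemma chain_bound (D d l g : nat) : (0 < D)%N -> (D %| d * l ^ g)%N ->
  exists2 g', (g' <= D)%N & (D %| d * l ^ g')%N.
Proof.
move=> D0 Hg.
have ex : exists k, (D %| d * l ^ k)%N by exists g.
case: (ex_minnP ex) => k Hk Hmin.
exists k => //.
pose A j := gcdn D (d * l ^ j).
have F1 j : A j.+1 = gcdn D (l * A j).
  rewrite /A muln_gcdr gcdnA.
  have -> : gcdn D (l * D) = D by apply/gcdn_idPl; apply: dvdn_mull.
  by rewrite expnS mulnCA.
have F2 j : (A j %| A j.+1)%N.
  rewrite /A dvdn_gcd dvdn_gcdl /=.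
  apply: dvdn_trans (dvdn_gcdr _ _) _.
  by rewrite expnS mulnCA dvdn_mull.
have F3 j i : A j = A j.+1 -> A (j + i)%N = A j.
  move=> E; elim: i => [|i IH]; first by rewrite addn0.
  by rewrite addnS F1 IH -F1 E.
have F4 : A k = D by apply/gcdn_idPl.
have F5 j : (j < k)%N -> A j != D.
  move=> jk; apply/eqP=> E.
  have : (D %| d * l ^ j)%N by rewrite -E /A dvdn_gcdr.
  by move/Hmin; rewrite leqNgt jk.
have Apos j : (0 < A j)%N by rewrite /A gcdn_gt0 D0.
have F6 j : (j <= k)%N -> (j < A j)%N.
  elim: j => [|j IH] jk; first exact: Apos.
  have IH' := IH (ltnW jk).
  have ne : A j != A j.+1.
    apply/eqP=> E; have := F3 j (k - j)%N E.
    rewrite subnKC ?(ltnW jk) // F4 => E2.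
    by move: (F5 j jk); rewrite -E2 eqxx.
  have le : (A j <= A j.+1)%N by apply: dvdn_leq; [exact: Apos | exact: F2].
  have : (A j < A j.+1)%N by rewrite ltn_neqAle ne le.
  lia.
have := F6 k (leqnn k); rewrite F4; lia.
Qed.


Lemma int_dvd (x : rat) (N : nat) : x * N%:R \is a Num.int -> (`|denq x| %| N)%N.
Proof.
move=> /intrP[m Hm].
have E : (m * denq x = numq x * N%:Z)%R.
  apply: (@intr_inj rat).
  rewrite !rmorphM /= -Hm numqE. by rewrite pmulrn mulrAC.
have E2 : (`|m| * `|denq x| = `|numq x| * N)%N.
  by rewrite -[in RHS](absz_nat N) -!abszM E.
rewrite -(@Gauss_dvdr _ `|numq x|); last by rewrite coprime_sym coprime_num_den.
by rewrite -E2 dvdn_mull.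
Qed.

Lemma dvd_int (x : rat) (N : nat) : (`|denq x| %| N)%N -> x * N%:R \is a Num.int.
Proof.
move=> /dvdnP[c ->].
have -> : ((c * `|denq x|)%:R : rat) = c%:R * (denq x)%:~R.
  by rewrite natrM -[`|denq x|%:R]/((`|denq x|%:Z)%:~R) absz_denq.
by rewrite mulrCA -numqE rpredM ?intr_int ?natr_int.
Qed.


Lemma hfun_min d l x g : x * (d * l ^ g)%:R \is a Num.int -> (hfun d l x <= g)%N.
Proof.
move=> Hg; rewrite /hfun.
set P := (fun i : nat => _).
case: (ltnP g `|denq x|.+1) => hg.
  rewrite leqNgt; apply/negP => /(before_find 0%N).
  by rewrite nth_iota // add0n /P -Qint_def Hg.
apply: leq_trans hg.
by rewrite -[X in (_ <= X)%N](size_iota 0) find_size.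
Qed.

Lemma hfun_spec d l x g : (0 < d)%N -> x * (d * l ^ g)%:R \is a Num.int ->
  x * (d * l ^ hfun d l x)%:R \is a Num.int.
Proof.
move=> d0 Hg.
have D0 : (0 < `|denq x|)%N by rewrite absz_gt0 denq_neq0.
have [g' g'le Hg'] := chain_bound D0 (int_dvd Hg).
rewrite /hfun; set P := (fun i : nat => _).
have hasP' : has P (iota 0 `|denq x|.+1).
  apply/hasP; exists g'; first by rewrite mem_iota.
  by rewrite /P -Qint_def dvd_int.
have := nth_find 0%N hasP'.
rewrite nth_iota; last by rewrite -[X in (_ < X)%N](size_iota 0) -has_find.
by rewrite add0n /P -Qint_def.
Qed.


Lemma seq_argmax (T : eqType) (s : seq T) (P : pred T) (f : T -> nat) :
  (exists2 x, x \in s & P x) ->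
  exists x, [/\ x \in s, P x & forall y, y \in s -> P y -> (f y <= f x)%N].
Proof.
elim: s => [[x]//|z s IH] [x Hx Px].
case Pz : (P z); last first.
  have [y [Hy Py Hm]] : exists y, [/\ y \in s, P y & forall y0, y0 \in s -> P y0 -> (f y0 <= f y)%N].
    apply: IH; exists x => //.
    by move: Hx; rewrite in_cons => /orP[/eqP Ex|//]; move: Pz; rewrite -Ex Px.
  exists y; split; first by rewrite in_cons Hy orbT.
    by [].
  by move=> y0; rewrite in_cons => /orP[/eqP->|]; [rewrite Pz | exact: Hm].
case: (boolP (has P s)) => [/hasP[x1 Hx1 Px1] | hn].
  have [y [Hy Py Hm]] := IH (ex_intro2 _ _ x1 Hx1 Px1).
  case: (leqP (f z) (f y)) => Hzy.
    exists y; split; first by rewrite in_cons Hy orbT.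
      by [].
    by move=> y0; rewrite in_cons => /orP[/eqP->|]; [|exact: Hm].
  exists z; split; first by rewrite mem_head.
    by [].
  move=> y0; rewrite in_cons => /orP[/eqP->//|H0 P0].
  by apply: leq_trans (Hm _ H0 P0) (ltnW Hzy).
exists z; split; first by rewrite mem_head.
  by [].
move=> y0; rewrite in_cons => /orP[/eqP->//|H0 P0].
by move/hasPn: hn => /(_ _ H0); rewrite P0.
Qed.

Lemma seq_argmin (T : eqType) (s : seq T) (f : T -> rat) (x0 : T) :
  x0 \in s -> exists2 x, x \in s & forall y, y \in s -> f x <= f y.
Proof.
elim: s x0 => [//|z s IH] x0 _.
case: (boolP (s == [::])) => [/eqP->|ns].
  by exists z; rewrite ?mem_head // => y; rewrite inE => /eqP->.
have [x1 Hx1] : exists x1, x1 \in s by case: s ns {IH} => [//|w s] _; exists w; rewrite mem_head.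
have [x Hx Hm] := IH x1 Hx1.
case: (leP (f z) (f x)) => H.
  exists z; first by rewrite mem_head.
  move=> y; rewrite in_cons => /orP[/eqP->//|Hy].
  by apply: le_trans H (Hm _ Hy).
exists x; first by rewrite in_cons Hx orbT.
move=> y; rewrite in_cons => /orP[/eqP->|Hy]; [exact: ltW | exact: Hm].
Qed.


Lemma bigmax_spec (T : eqType) (F : T -> rat) (x0 : T) (s : seq T) :
  let B := \big[Num.max/F x0]_(p <- s) F p in
  F x0 <= B /\ (forall p, p \in s -> F p <= B) /\
  (B = F x0 \/ exists2 p, p \in s & B = F p).
Proof.
elim: s => [|y s [IH1 [IH2 IH3]]] /=; first by rewrite big_nil; split=> //; split=> //; left.
rewrite big_cons.
set B' := \big[_/_]_(_ <- _) _ in IH1 IH2 IH3 *.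
split; first by rewrite le_max IH1 orbT.
split.
  move=> p; rewrite in_cons => /orP[/eqP->|Hp]; first by rewrite le_max lexx.
  by rewrite le_max IH2 ?orbT.
case: (leP (F y) B') => H.
  case: IH3 => [->|[p Hp ->]]; [left | right] => //.
  by exists p => //; rewrite in_cons Hp orbT.
by right; exists y => //; rewrite in_cons eqxx.
Qed.

Lemma helper3 (w X A v B j j' : rat) : w * A + j' = v * B + j ->
  w * (X * A) = (v * X) * B + (j - j') * X.
Proof.
move=> E; rewrite mulrCA (_ : w * A = v * B + j - j'); last by rewrite -E addrK.
ring.
Qed.

Section S.
Variables (K : fieldType) (ell n : nat) (a : nat -> {poly K}).

Lemma ptsP_mem i j : (i, j) \in ptsP n a <-> (i <= n)%N /\ (a i)`_j != 0.
Proof.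
split.
  move=> /allpairsPdep [i' [j' [Hi Hj [-> ->]]]].
  move: Hi; rewrite mem_iota add0n ltnS /= => Hi; split=> //.
  by move: Hj; rewrite mem_filter => /andP[].
move=> [Hi Hj]; apply/allpairsPdep; exists i, j; split => //.
  by rewrite mem_iota add0n ltnS.
rewrite mem_filter Hj mem_iota add0n /=.
by rewrite ltnNge; apply/negP => /(nth_default 0); apply/eqP.
Qed.

Lemma valp_le i j : (a i)`_j != 0 -> (valp (a i) <= j)%N.
Proof.
move=> Hj; rewrite leqNgt; apply/negP => /(before_find 0).
by rewrite Hj.
Qed.

Lemma valp_coef i : a i != 0 -> (a i)`_(valp (a i)) != 0.
Proof.
move=> Hi.
have H : has (fun c => c != 0) (a i).
  apply/hasP; exists (lead_coef (a i)); last by rewrite lead_coef_eq0.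
  by rewrite lead_coefE mem_nth // prednK // size_poly_gt0.
exact: (nth_find 0 H).
Qed.


Hypothesis ell0 : (0 < ell)%N.
Hypothesis a0 : a 0%N != 0.

Local Notation L i := ((ell ^ i)%:R : rat).

Lemma L_gt0 i : 0 < L i.
Proof. by rewrite ltr0n expn_gt0 ell0. Qed.

Lemma piL_ge q i j : (i <= n)%N -> (a i)`_j != 0 -> q <= piL ell n a q * L i + j%:R.
Proof.
move=> Hi Hj.
have [_ [H2 _]] := bigmax_spec (fun p : nat * nat => (q - p.2%:R) / (ell ^ p.1)%:R)
   (head (0%N, 0%N) (ptsP n a)) (ptsP n a).
have := H2 (i, j) (proj2 (ptsP_mem i j) (conj Hi Hj)).
rewrite /= -/(piL ell n a q) ler_pdivrMr ?L_gt0 //.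
by rewrite lerBlDr.
Qed.

Lemma ptsP_head : head (0%N, 0%N) (ptsP n a) \in ptsP n a.
Proof.
have H : (0%N, valp (a 0%N)) \in ptsP n a by apply/ptsP_mem; split => //; exact: valp_coef.
by case: (ptsP n a) H => [|x s] //= _; rewrite mem_head.
Qed.

Lemma piL_att q : exists i j, [/\ (i <= n)%N, (a i)`_j != 0 & q = piL ell n a q * L i + j%:R].
Proof.
have [_ [_ H3]] := bigmax_spec (fun p : nat * nat => (q - p.2%:R) / (ell ^ p.1)%:R)
   (head (0%N, 0%N) (ptsP n a)) (ptsP n a).
rewrite -/(piL ell n a q) in H3.
have [p Hp E] : exists2 p, p \in ptsP n a & piL ell n a q = (q - p.2%:R) / (ell ^ p.1)%:R.
  case: H3 => [->|[p Hp ->]]; last by exists p.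
  by exists (head (0%N, 0%N) (ptsP n a)) => //; exact: ptsP_head.
case: p Hp E => i j /ptsP_mem [Hi Hj] /= E.
exists i, j; split => //.
by rewrite E divfK ?subrK // gt_eqF // L_gt0.
Qed.


Lemma piL_mono v q : inPsi ell n a v q -> v <= piL ell n a q.
Proof.
move=> [i [j [Hi Hj ->]]].
have := piL_ge (v * L i + j%:R) Hi Hj.
rewrite lerD2r ler_pM2r ?L_gt0 //.
Qed.

Lemma inV_ge muK : (forall mu, isSlope ell n a mu -> mu <= muK) ->
  forall w, inV ell n a w -> - muK <= w.
Proof.
move=> HmuK w [k]; elim: k w => [|k IH] w /=.
  by move=> /HmuK; rewrite lerNl.
move=> [v [Hv [q [Hq ->]]]].
apply: le_trans (IH v Hv) (piL_mono Hq).
Qed.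

Lemma inV_Z d : (forall mu, isSlope ell n a mu -> (denq mu %| d%:Z)%Z) ->
  forall w, inV ell n a w -> exists g, w * (d * ell ^ g)%:R \is a Num.int.
Proof.
move=> Hd w [k]; elim: k w => [|k IH] w /=.
  move=> /Hd Hw; exists 0%N; apply: dvd_int.
  by rewrite expn0 muln1 -denqN; exact: Hw.
move=> [v [Hv [q [[i [j [Hi Hj Eq]]] ->]]]].
have [g Hg] := IH v Hv.
have [i' [j' [Hi' Hj' E']]] := piL_att q.
exists (g + i')%N.
set w' := piL ell n a q in E' *.
have -> : w' * (d * ell ^ (g + i'))%:R =
   (v * (d * ell ^ g)%:R) * L i + (j%:R - j'%:R) * (d * ell ^ g)%:R.
  by rewrite expnD mulnA natrM; apply: helper3; rewrite -E' -Eq.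
by apply: rpredD; apply: rpredM; rewrite ?natr_int ?rpredB ?natr_int.
Qed.

End S.


Section T.
Variables (K : fieldType) (ell n : nat) (a : nat -> {poly K}) (d : nat).
Hypothesis ell2 : (2 <= ell)%N.
Hypothesis d1 : (1 <= d)%N.
Hypothesis a0 : a 0%N != 0.

Local Notation L i := ((ell ^ i)%:R : rat).
Local Notation H x := (hfun d ell x).
Local Notation isZ x := ((x : rat) \is a Num.int).

Let ell0 : (0 < ell)%N. Proof. by apply: leq_trans ell2. Qed.
Let d0 : (0 < d)%N. Proof. by []. Qed.

Lemma Zup x m : (exists g, isZ (x * (d * ell ^ g)%:R)) -> (H x <= m)%N ->
  isZ (x * (d * ell ^ m)%:R).
Proof.
move=> [g Hg] Hm.
have Hs := hfun_spec d0 Hg.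
have -> : (d * ell ^ m = (d * ell ^ H x) * ell ^ (m - H x))%N.
  by rewrite -mulnA -expnD subnKC.
by rewrite natrM mulrA rpredM ?natr_int.
Qed.

Lemma h_rel v v' i0 j0 p' j' : (exists g, isZ (v' * (d * ell ^ g)%:R)) ->
  v * L i0 + j0%:R = v' * L p' + j'%:R ->
  (H v <= (H v' - p') + i0)%N.
Proof.
move=> Zv' E.
apply: hfun_min.
set g := (H v' - p')%N.
have Z1 : isZ (v' * (d * ell ^ (g + p'))%:R).
  by apply: Zup => //; rewrite /g; lia.
have -> : v * (d * ell ^ (g + i0))%:R =
    v' * (d * ell ^ (g + p'))%:R + (j'%:R - j0%:R) * (d * ell ^ g)%:R.
  rewrite !expnD !mulnA !natrM.
  by rewrite [v' * _]mulrA; apply: helper3.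
by rewrite rpredD // rpredM ?rpredB ?natr_int.
Qed.

Lemma tau_le x N : 0 < x -> (0 < N)%N -> (N <= d * ell ^ n)%N -> isZ (x * N%:R) ->
  1 / (d * ell ^ n)%:R <= x.
Proof.
move=> x0 N0 Nle Zx.
have h1 : 1 <= x * N%:R.
  have := norm_intr_ge1 Zx; rewrite gtr0_norm ?mulr_gt0 ?ltr0n //.
  by apply; rewrite gt_eqF // mulr_gt0 ?ltr0n.
have dpos : (0 : rat) < (d * ell ^ n)%:R by rewrite ltr0n muln_gt0 d0 expn_gt0 ell0.
rewrite ler_pdivrMr //.
apply: le_trans h1 _.
by rewrite ler_pM2l // ler_nat.
Qed.


Variable tau : rat.
Hypothesis Hd : forall mu, isSlope ell n a mu -> (denq mu %| d%:Z)%Z.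
Hypothesis Htau : is_tau ell n a d tau.

Local Notation val i := ((valp (a i))%:R : rat).

Lemma tau_pos : 0 < tau.
Proof.
have [[->|[mu [w [_ _ h ->]]]] _ _] := Htau.
  by rewrite mul1r invr_gt0 ltr0n muln_gt0 d0 expn_gt0 ell0.
lra.
Qed.

Lemma step v v' q : inV ell n a v -> inV ell n a v' -> v < v' ->
  inPsi ell n a v q -> v' = piL ell n a q ->
  tau <= v' - v \/ (H v < H v')%N.
Proof.
move=> Vv Vv' vv' [i0 [j0 [Hi0 Hj0 Eq]]] Ev'.
have [_ Htau1 Htau2] := Htau.
have Zv := inV_Z ell0 a0 Hd Vv.
have Zv' := inV_Z ell0 a0 Hd Vv'.
have ge := @piL_ge K ell n a ell0 q.
rewrite -Ev' in ge.
have [[p' j'] [Hpm Pp Hmax]] : exists x, [/\ x \in ptsP n a,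
     (q == v' * L x.1 + x.2%:R) & forall y, y \in ptsP n a ->
        (q == v' * L y.1 + y.2%:R) -> (y.1 <= x.1)%N].
  apply: (@seq_argmax _ _ (fun y : nat * nat => q == v' * L y.1 + y.2%:R) (fun y => y.1)).
  have [i' [j'' [Hi' Hj' E']]] := piL_att n ell0 a0 q.
  exists (i', j''); first by apply/ptsP_mem.
  by rewrite /= {1}E' -Ev' eqxx.
move: Hpm => /ptsP_mem [Hp' Hj'] /=.
move/eqP: Pp => /= Eq'.
have case_n : (H v <= n)%N -> (H v' <= n)%N -> tau <= v' - v.
  move=> h1 h2.
  apply: le_trans Htau1 _.
  apply: (@tau_le (v' - v) (d * ell ^ n)) => //.
  - by rewrite subr_gt0.
  - by rewrite muln_gt0 d0 expn_gt0 ell0.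
  - by rewrite mulrBl rpredB //; apply: Zup.
have hrel := h_rel Zv' (etrans (esym Eq) Eq').
case: (ltngtP i0 p') => Hip.
-
  case: (leqP (H v) n) => h1; case: (leqP (H v') n) => h2.
  + by left; apply: case_n.
  + by right; lia.
  + by right; lia.
  + by right; lia.
-
  have ap' : a p' != 0 by apply: contraNneq Hj' => ->; rewrite coef0.
  have ai0 : a i0 != 0 by apply: contraNneq Hj0 => ->; rewrite coef0.
  have Lpos := L_gt0 ell0.
  have Vp_le : ((valp (a p'))%:R : rat) <= j'%:R by rewrite ler_nat; exact: valp_le.
  have Eq'' : q = v' * L p' + val p'.
    have := ge p' (valp (a p')) Hp' (valp_coef ap'); lra.
  set S := [seq i <- iota 0 n.+1 | (p' < i)%N && (a i != 0)].
  have i0S : i0 \in S by rewrite mem_filter Hip ai0 mem_iota add0n ltnS Hi0.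
  pose c i := (val i - val p') / (L i - L p').
  have [i2 i2S Hmin] := seq_argmin c i0S.
  move: i2S; rewrite mem_filter mem_iota add0n ltnS => /andP[/andP[pi2 ai2] /andP[_ i2n]].
  set mu := c i2.
  have Lgt i : (p' < i)%N -> L p' < L i by move=> h; rewrite ltr_nat ltn_exp2l.
  have s1 i : (p' < i)%N -> (i <= n)%N -> a i != 0 -> val p' - mu * L p' <= val i - mu * L i.
    move=> h1 h2 h3.
    have : mu <= c i by apply: Hmin; rewrite mem_filter h1 h3 mem_iota add0n ltnS h2.
    rewrite /c ler_pdivlMr ?subr_gt0 ?Lgt // => h.
    rewrite mulrBr in h; lra.
  have s2 : - mu < v'.
    have hle := ge i2 (valp (a i2)) i2n (valp_coef ai2).
    have hne : q != v' * L i2 + val i2.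
      apply/negP => /eqP h.
      have := Hmax (i2, valp (a i2)); rewrite /= h eqxx => /(_ _ isT).
      by rewrite leqNgt pi2 => /(_ (proj2 (ptsP_mem n a _ _) (conj i2n (valp_coef ai2)))).
    have hlt : q < v' * L i2 + val i2 by rewrite lt_neqAle hne hle.
    rewrite ltrNl /mu /c ltr_pdivlMr ?subr_gt0 ?Lgt //.
    rewrite mulrBr !mulNr; lra.
  have s4 : val i2 - mu * L i2 = val p' - mu * L p'.
    rewrite /mu /c; field.
    by rewrite subr_eq0 gt_eqF // Lgt.
  have s3 i : (i <= n)%N -> a i != 0 -> val p' - mu * L p' <= val i - mu * L i.
    move=> h1 h2.
    case: (ltngtP i p') => hip; last by rewrite hip.
    - have hle := ge i (valp (a i)) h1 (valp_coef h2).
      have hL : L i < L p' by rewrite ltr_nat ltn_exp2l.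
      have hp : 0 <= (v' + mu) * (L p' - L i).
        by apply: mulr_ge0; lra.
      rewrite mulrDl !mulrBr in hp; lra.
    - exact: s1.
  have slope : isSlope ell n a mu.
    exists p', i2; split.
      by split => //; rewrite neq_ltn pi2.
    by move=> i h1 h2; split; [exact: s3 | rewrite s4; exact: s3].
  have t1 := Htau2 mu v' slope Vv' s2.
  left; case: (leP v (- mu)) => hv; first by lra.
  have t2 := Htau2 mu v slope Vv hv.
  have tp := tau_pos.
  have hj0 : val i0 <= j0%:R by rewrite ler_nat; exact: valp_le.
  have hs1 := s1 i0 Hip Hi0 ai0.
  have hL2 : 2%:R * L p' <= L i0.
    rewrite -natrM ler_nat.
    apply: leq_trans (_ : (ell * ell ^ p' <= _)%N).
      by rewrite leq_mul2r ell2 orbT.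
    by rewrite -expnS leq_exp2l.
  have h1 : 0 <= (v + mu - tau) * (L i0 - L p').
    by have := Lgt i0 Hip => ?; apply: mulr_ge0; lra.
  have h2 : tau * L p' <= tau * (L i0 - L p').
    by apply: ler_wpM2l; [exact: ltW | lra].
  have h3 : tau * L p' <= (v' - v) * L p'.
    rewrite ?mulrBr ?mulrDl ?mulrBl in h1 h2 *; lra.
  by rewrite ler_pM2r in h3.
-
  left; apply: le_trans Htau1 _.
  subst i0.
  apply: (@tau_le (v' - v) (ell ^ p')).
  - by rewrite subr_gt0.
  - by rewrite expn_gt0 ell0.
  - rewrite -[X in (X <= _)%N]mul1n; apply: leq_mul => //.
    by rewrite leq_exp2l.
  - have -> : (v' - v) * L p' = j0%:R - j'%:R.
      by rewrite mulrBl; move: Eq'; rewrite Eq => E1; lra.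
    by rewrite rpredB ?natr_int.
Qed.

Lemma step_drop v v' q : inV ell n a v' ->
  inPsi ell n a v q -> v' = piL ell n a q -> (H v <= H v' + n)%N.
Proof.
move=> Vv' [i0 [j0 [Hi0 Hj0 Eq]]] Ev'.
have Zv' := inV_Z ell0 a0 Hd Vv'.
have [i' [j' [Hi' Hj' E']]] := piL_att n ell0 a0 q.
rewrite -Ev' in E'.
have := h_rel Zv' (etrans (esym Eq) E').
lia.
Qed.

End T.

Unset Implicit Arguments.
Theorem mainTheorem10 (K : fieldType) (ell n : nat) (a : nat -> {poly K})
  (d : nat) (muK tau : rat) (M : nat) (v : nat -> rat) :
  (2 <= ell)%N -> (1 <= n)%N -> a 0%N != 0 -> a n != 0 ->
  (* d >= 1 is a common multiple of the denominators of the slopes *)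
  (1 <= d)%N -> (forall mu, isSlope ell n a mu -> (denq mu %| d%:Z)%Z) ->
  (* muK = mu_kappa = max S(L) *)
  isSlope ell n a muK -> (forall mu, isSlope ell n a mu -> mu <= muK) ->
  is_tau ell n a d tau ->
  (forall i, (i <= M)%N -> inV ell n a (v i)) ->
  (forall i, (i < M)%N -> v i < v i.+1) ->
  (forall i, (i < M)%N -> exists q, inPsi ell n a (v i) q /\ v i.+1 = piL ell n a q) ->
  (M%:R : rat) <= (n.+1)%:R * (v M + muK) / tau + (hfun d ell (v M))%:R.
Proof.
move=> ell2 n1 a0 an d1 Hd _ HmuK Htau HV Hlt Hstep.
have ell0 : (0 < ell)%N by apply: leq_trans ell2.
have tp : 0 < tau := tau_pos ell2 d1 Htau.
have np : (0 : rat) < (n.+1)%:R by rewrite ltr0n.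
suff : forall k, (k <= M)%N ->
    (k%:R : rat) <= (n.+1)%:R * (v k + muK) / tau + (hfun d ell (v k))%:R.
  by apply.
elim => [|k IH] hk.
  have := inV_ge ell0 HmuK (HV 0%N hk) => h0.
  apply: addr_ge0 => //; apply: divr_ge0; last exact: ltW.
  by apply: mulr_ge0; [exact: ltW | lra].
have hkM : (k < M)%N by [].
have IH' := IH (ltnW hk).
have [q [Hq Eq]] := Hstep k hkM.
have Vk := HV k (ltnW hk).
have Vk1 := HV k.+1 hk.
have hst := step ell2 d1 a0 Hd Htau Vk Vk1 (Hlt k hkM) Hq Eq.
have hdr := step_drop ell2 d1 a0 Hd Vk1 Hq Eq.
set A := (n.+1)%:R * (v k.+1 + muK) / tau.
set B := (n.+1)%:R * (v k + muK) / tau in IH'.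
have AB : A - B = (n.+1)%:R * (v k.+1 - v k) / tau.
  by rewrite /A /B -mulrBl -mulrBr opprD addrACA subrr addr0.
set Hk := hfun d ell (v k) in IH' hst hdr.
set Hk1 := hfun d ell (v k.+1) in hst hdr *.
rewrite -addn1 natrD.
case: hst => [ht|hh].
  have h1 : (n.+1)%:R <= A - B.
    by rewrite AB ler_pdivlMr //; apply: ler_wpM2l; [exact: ltW | exact: ht].
  have h2 : (Hk%:R : rat) <= Hk1%:R + n%:R by rewrite -natrD ler_nat.
  move: h1 h2; rewrite -[n.+1]addn1 natrD; lra.
have h1 : 0 <= A - B.
  rewrite AB; apply: divr_ge0; last exact: ltW.
  by apply: mulr_ge0; [exact: ltW | have := Hlt k hkM; lra].
have h2 : (Hk%:R : rat) + 1 <= Hk1%:R by rewrite natr1 ler_nat.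
lra.
Qed.
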